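(* For every $k\in\mathbb{N}$ and every $\ell\in\{1,\dots,N\}$, \[\mathrm{mR}(\lambda^k_\ell)\le\mathcal{O}\big(|V|^{(|V|+3)(|\Pi|+2)}\big)\quad\text{and}\quad\mathrm{mR}(\lambda^k_{\ge\ell})\le\mathcal{O}\big(|V|^{(|V|+3)(|\Pi|+2)}\big).\]
   Context: Let $\mathcal{G}$ be a quantitative reachability game on an arena $G=(\Pi,V,(V_i)_{i\in\Pi},E)$ (finite player set $\Pi$, finite vertex set $V$ with $|V|\ge2$, $|\Pi|\le|V|$, partition $(V_i)$, every vertex has a successor) with targets $F_i\subseteq V$ and costs $\mathrm{Cost}_i(\rho)=$ least $k$ with $\rho_k\in F_i$ (or $+\infty$); $v_0\in V$. Extended game: arena $X$ with vertices $V^X=V\times2^\Pi$, edges $((v,I),(v',I'))\in E^X$ iff $(v,v')\in E$ and $I'=I\cup\{i:v'\in F_i\}$, $(v,I)\in V^X_i$ iff $v\in V_i$, targets $F^X_i=\{(v,I):i\in I\}$ with corresponding costs; $x_0=(v_0,\{i:v_0\in F_i\})$; $I(u)$ is the second component. $\mathcal{I}$ is the set of $I$ with some $(v,I)$ reachable from $x_0$, $N=|\mathcal{I}|$, $J_1<\dots<J_N$ a fixed total order of $\mathcal{I}$ extending $I<I'$ iff $I\ne I'$ and some $(v',I')$ is reachable from some $(v,I)$. $V^{J_n}=\{(v,J_n):v\in V\}$, $V^{\ge J_n}=\bigcup_{m\ge n}V^{J_m}$. Labelings: for $\lambda:V^X\to\mathbb{N}\cup\{+\infty\}$, a play $\rho$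 of $X$ is $\lambda$-consistent if $\mathrm{Cost}_i(\rho_{\ge n})\le\lambda(\rho_n)$ whenever $\rho_n\in V^X_i$. $\lambda^0(u)=0$ if $u\in V^X_i$ and $i\in I(u)$, else $+\infty$. The update of $\lambda^k$ w.r.t. $V^{\ge J_n}$ keeps values outside $V^{\ge J_n}$ and for $u\in V^{\ge J_n}\cap V^X_i$ sets $\lambda^{k+1}(u)=0$ if $i\in I(u)$, otherwise $1+\min_{(u,u')\in E^X}\sup\{\mathrm{Cost}_i(\rho):\rho$ a $\lambda^k$-consistent play from $u'\}$ ($1+(+\infty)=+\infty$). The sequence $(\lambda^k)$ is generated by $n_0=N$, $\lambda^{k+1}=$ update of $\lambda^k$ w.r.t. $V^{\ge J_{n_k}}$, $n_{k+1}=n_k-1$ if $\lambda^{k+1}=\lambda^k$ and $n_k>1$, else $n_{k+1}=n_k$. $\mathrm{mR}(f)$ is the maximum of the finite values of $f$ ($0$ if none); $\lambda^k_\ell$ and $\lambda^k_{\ge\ell}$ are the restrictions of $\lambda^k$ to $V^{J_\ell}$ and $V^{\ge J_\ell}$. The $\mathcal{O}$ is with respect to the game parameters $|V|,|\Pi|$. *)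

(* Defs.v *)
From mathcomp Require Import all_boot.
From Stdlib Require Import ClassicalEpsilon.

Set Implicit Arguments.
Unset Strict Implicit.
Unset Printing Implicit Defensive.

(* Extended naturals N ∪ {+oo}: [Some n] = n, [None] = +oo. *)
Definition enat := option nat.

Definition enat_le (a b : enat) : bool :=
  match a, b with
  | _, None => true
  | None, Some _ => false
  | Some x, Some y => x <= y
  end.

Definition enat_succ (a : enat) : enat :=
  match a with Some n => Some n.+1 | None => None end.

Definition is_lub (S : enat -> Prop) (s : enat) : Prop :=
  (forall x, S x -> enat_le x s) /\
  (forall t, (forall x, S x -> enat_le x t) -> enat_le s t).

Definition is_glb (S : enat -> Prop) (s : enat) : Prop :=
  (forall x, S x -> enat_le s x) /\
  (forall t, (forall x, S x -> enat_le t x) -> enat_le t s).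

Definition enat_sup (S : enat -> Prop) : enat :=
  epsilon (inhabits None) (is_lub S).
Definition enat_inf (S : enat -> Prop) : enat :=
  epsilon (inhabits None) (is_glb S).

Definition least_index (P : pred nat) : enat :=
  match excluded_middle_informative (exists k, P k) with
  | left H => Some (ex_minn H)
  | right _ => None
  end.

Section Game.
Variables (Pl V : finType) (owner : V -> Pl) (E : rel V) (F : Pl -> {set V}).

Definition XV : finType := (V * {set Pl})%type.

Definition Xedge : rel XV := fun u u' =>
  E u.1 u'.1 && (u'.2 == u.2 :|: [set i | u'.1 \in F i]).

Definition Xowner (u : XV) : Pl := owner u.1.

Definition XF (i : Pl) : {set XV} := [set u : XV | i \in u.2].

Definition x0 (v0 : V) : XV := (v0, [set i | v0 \in F i]).

Definition play (r : nat -> XV) : Prop := forall n, Xedge (r n) (r n.+1).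

Definition suffix (r : nat -> XV) (n : nat) : nat -> XV := fun k => r (n + k).

Definition Cost (i : Pl) (r : nat -> XV) : enat :=
  least_index (fun k => r k \in XF i).

Definition consistent (lam : XV -> enat) (r : nat -> XV) : Prop :=
  forall n (i : Pl), Xowner (r n) = i -> enat_le (Cost i (suffix r n)) (lam (r n)).

Definition reachI (v0 : V) : {set {set Pl}} :=
  [set I | [exists v, connect Xedge (x0 v0) (v, I)]].

Definition NN (v0 : V) : nat := #|reachI v0|.

(* J : nat -> {set Pl}, used on indices 1..N, is a fixed total order of I
   extending the reachability order *)
Definition valid_order (v0 : V) (J : nat -> {set Pl}) : Prop :=
  (forall n, 1 <= n <= NN v0 -> J n \in reachI v0) /\
  (forall I, I \in reachI v0 -> exists2 n, 1 <= n <= NN v0 & J n = I) /\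
  (forall m n, 1 <= m <= NN v0 -> 1 <= n <= NN v0 -> J m = J n -> m = n) /\
  (forall m n, 1 <= m <= NN v0 -> 1 <= n <= NN v0 -> J m <> J n ->
     (exists v v', connect Xedge (v, J m) (v', J n)) -> m < n).

Definition VJ (J : nat -> {set Pl}) (n : nat) : pred XV :=
  fun u => u.2 == J n.
Definition VgeJ (v0 : V) (J : nat -> {set Pl}) (n : nat) : pred XV :=
  fun u => [exists m : 'I_(NN v0).+1, (n <= m) && (u.2 == J m)].

Definition lam0 : XV -> enat :=
  fun u => if Xowner u \in u.2 then Some 0 else None.

Definition update (lam : XV -> enat) (A : pred XV) : XV -> enat :=
  fun u =>
    if A u then
      if Xowner u \in u.2 then Some 0
      else enat_succ (enat_inf (fun x => exists u', Xedge u u' /\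
             x = enat_sup (fun c => exists r, [/\ play r, r 0 = u',
                                 consistent lam r & c = Cost (Xowner u) r])))
    else lam u.

Definition step (v0 : V) (J : nat -> {set Pl}) (p : (XV -> enat) * nat)
  : (XV -> enat) * nat :=
  let lam := p.1 in let n := p.2 in
  let lam' := update lam (VgeJ v0 J n) in
  (lam', if [forall u, lam' u == lam u] && (1 < n) then n.-1 else n).

Fixpoint lamseq (v0 : V) (J : nat -> {set Pl}) (k : nat) : (XV -> enat) * nat :=
  match k with
  | 0 => (lam0, NN v0)
  | k.+1 => step v0 J (lamseq v0 J k)
  end.

Definition lam (v0 : V) (J : nat -> {set Pl}) (k : nat) : XV -> enat :=
  (lamseq v0 J k).1.

(* mR of the restriction of f to A: max of finite values, 0 if none *)
Definition mR (f : XV -> enat) (A : pred XV) : nat :=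
  \max_(u : XV | A u) odflt 0 (f u).

End Game.

(* Main.v *)
Require Import Defs.
From mathcomp Require Import all_boot.
From Stdlib Require Import ClassicalEpsilon Classical.
From mathcomp Require Import zify.

Set Implicit Arguments.
Unset Strict Implicit.
Unset Printing Implicit Defensive.

Lemma enat_le_trans a b c : enat_le a b -> enat_le b c -> enat_le a c.
Proof. by case: a; case: b; case: c => //= x y z; apply: leq_trans. Qed.

Lemma enat_le_refl a : enat_le a a.
Proof. by case: a => //= x. Qed.

Lemma enat_le_None a : enat_le a None.
Proof. by case: a. Qed.

Definition pb (P : Prop) : bool :=
  if excluded_middle_informative P then true else false.

Lemma pbP (P : Prop) : reflect P (pb P).
Proof. rewrite /pb; case: excluded_middle_informative => H; by constructor. Qed.

Lemma lub_ex S : exists s, is_lub S s.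
Proof.
case: (classic (exists m, forall x, S x -> enat_le x (Some m))) => [H|H].
- have H' : exists m, pb (forall x, S x -> enat_le x (Some m)).
    by case: H => m Hm; exists m; apply/pbP.
  exists (Some (ex_minn H')).
  case: ex_minnP => m /pbP Hm Hmin; split => // [[t|]] Ht //=.
  by apply: Hmin; apply/pbP.
- exists None; split => [x _|[t|] Ht //]; first exact: enat_le_None.
  by exfalso; apply: H; exists t.
Qed.

Lemma glb_ex S : exists s, is_glb S s.
Proof.
case: (classic (exists m, S (Some m))) => [H|H].
- have H' : exists m, pb (S (Some m)) by case: H => m Hm; exists m; apply/pbP.
  exists (Some (ex_minn H')).
  case: ex_minnP => m /pbP Hm Hmin; split => [[x|] Hx|t Ht] //=.
  + by apply: Hmin; apply/pbP.
  + exact: Ht.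
- exists None; split => [[x|] Hx|t Ht] //=; last exact: enat_le_None.
  by exfalso; apply: H; exists x.
Qed.

Lemma sup_spec S : is_lub S (enat_sup S).
Proof. exact: (epsilon_spec (inhabits None) (is_lub S) (lub_ex S)). Qed.

Lemma inf_spec S : is_glb S (enat_inf S).
Proof. exact: (epsilon_spec (inhabits None) (is_glb S) (glb_ex S)). Qed.

Lemma LI_some (P : pred nat) c : least_index P = Some c -> P c /\ forall k, P k -> c <= k.
Proof.
rewrite /least_index; case: excluded_middle_informative => // H [<-].
by case: ex_minnP.
Qed.

Lemma LI_le (P : pred nat) k : P k -> enat_le (least_index P) (Some k).
Proof.
rewrite /least_index; case: excluded_middle_informative => [H|H] Pk; last first.
  by exfalso; apply: H; exists k.
by case: ex_minnP => m _ Hm /=; apply: Hm.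
Qed.

Lemma LI_none (P : pred nat) : (forall k, ~~ P k) -> least_index P = None.
Proof.
move=> H; rewrite /least_index; case: excluded_middle_informative => // [[k Pk]].
by move: (H k); rewrite Pk.
Qed.
Section S.
Variables (Pl V : finType) (owner : V -> Pl) (E : rel V) (F : Pl -> {set V}).
Local Notation XV := (XV Pl V).
Local Notation Xedge := (Xedge E F).
Local Notation play := (play E F).
Local Notation consistent := (consistent owner).
Local Notation sfx := Defs.suffix.

Lemma edge_sub (a b : XV) : Xedge a b -> a.2 \subset b.2.
Proof. by move/andP=> [_ /eqP->]; exact: subsetUl. Qed.

Lemma play_sub r s t : play r -> s <= t -> (r s).2 \subset (r t).2.
Proof.
move=> Hp; elim: t => [|t IH]; first by rewrite leqn0 => /eqP->.
rewrite leq_eqVlt => /orP [/eqP->|]; first exact: subxx.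
rewrite ltnS => /IH H; apply: subset_trans H _; exact: edge_sub (Hp t).
Qed.

Lemma inXF i (u : XV) : (u \in XF V i) = (i \in u.2).
Proof. by rewrite inE. Qed.

Lemma pump (lam : XV -> enat) (M : nat) (i : Pl) (r : nat -> XV) c :
  play r -> consistent lam r ->
  (forall t m, lam (r t) = Some m -> m <= M) ->
  Cost i r = Some c -> #|Pl| * (M + #|V| + 1) < c ->
  exists r', [/\ play r', r' 0 = r 0, consistent lam r' & Cost i r' = None].
Proof.
move=> Hp Hc HM Hcost Hlt.
set W := M + #|V| + 1.
have [Hci Hcmin] := LI_some Hcost.
have avoid : forall t, t < c -> i \notin (r t).2.
  move=> t Ht; apply/negP => Hin.
  by have := Hcmin t; rewrite /= inXF Hin => /(_ isT); rewrite leqNgt Ht.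
have [q Hq Hqeq] : exists2 q, q < #|Pl| & (r (q * W)).2 = (r (q * W + W)).2.
  apply: NNPP => Hne.
  have Hcard : forall q, q <= #|Pl| -> q <= #|(r (q * W)).2|.
    elim => [|q IH] Hq //.
    have Hq' : q < #|Pl| by [].
    have Hsub := @play_sub r (q * W) (q * W + W) Hp (leq_addr _ _).
    have Hneq : (r (q * W)).2 != (r (q * W + W)).2.
      by apply/eqP => Heq; apply: Hne; exists q.
    have Hpr : (r (q * W)).2 \proper (r (q * W + W)).2.
      by rewrite properEneq Hneq Hsub.
    have := proper_card Hpr; rewrite mulSn addnC.
    by have := IH (ltnW Hq'); lia.
  have := Hcard _ (leqnn _).
  have Hs : (r (#|Pl| * W)).2 \subset [set~ i].
    apply/subsetP => j Hj; rewrite !inE; apply/eqP => Hji; subst j.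
    by move: Hj; apply/negP; apply: avoid.
  have := subset_leq_card Hs; rewrite cardsC1.
  have : 0 < #|Pl| by apply/card_gt0P; exists i.
  lia.
set s := q * W.
have HsW : s + W < c.
  have : q.+1 * W <= #|Pl| * W by apply: leq_mul.
  rewrite mulSn /s; lia.
have Hconst : forall t, s <= t <= s + W -> (r t).2 = (r s).2.
  move=> t /andP [H1 H2]; apply/eqP; rewrite eqEsubset; apply/andP; split.
    by rewrite /s Hqeq; apply: play_sub.
  exact: play_sub.
have [a [b [Hsa Hab Hbs Hrab]]] :
    exists a b, [/\ s <= a, a < b, b <= s + #|V| & r a = r b].
  pose f := fun t : 'I_(#|V|).+1 => (r (s + t)).1.
  have [t1 [t2 [Hf Hne]]] : exists t1 t2 : 'I_(#|V|).+1, f t1 = f t2 /\ t1 <> t2.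
    apply: NNPP => Hne.
    have Hinj : injective f.
      move=> x y Hxy; apply: NNPP => Hxy'; apply: Hne; by exists x, y.
    by have := leq_card f Hinj; rewrite card_ord ltnn.
  have Heq : forall t1 t2 : 'I_(#|V|).+1, f t1 = f t2 -> r (s + t1) = r (s + t2).
    move=> x y; rewrite /f.
    have E1 : (r (s + x)).2 = (r s).2.
      by apply: Hconst; have := ltn_ord x; rewrite /W; lia.
    have E2 : (r (s + y)).2 = (r s).2.
      by apply: Hconst; have := ltn_ord y; rewrite /W; lia.
    move: E1 E2; case: (r (s + x)) => x1 x2; case: (r (s + y)) => y1 y2 /= -> -> ->.
    done.
  have H1 := ltn_ord t1; have H2 := ltn_ord t2.
  case: (ltngtP t1 t2) => Ht.
  - exists (s + t1), (s + t2); split => //; try lia; exact: Heq.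
  - exists (s + t2), (s + t1); split => //; try lia; symmetry; exact: Heq.
  - by exfalso; apply: Hne; apply: val_inj.
have Hrb : (r b).2 = (r s).2 by apply: Hconst; rewrite /W; lia.
have Hra : (r a).2 = (r s).2 by apply: Hconst; rewrite /W; lia.
have good : forall t m, t <= b -> lam (r t) = Some m ->
    Xowner owner (r t) \notin (r t).2 -> Xowner owner (r t) \in (r b).2.
  move=> t m Htb Hl Hn.
  have := Hc t _ erefl; rewrite Hl.
  case Hct: (Cost _ _) => [c'|] //= Hc'm.
  have [Hin _] := LI_some Hct.
  move: Hin; rewrite /= inXF /sfx => Hin.
  have Hm := HM t m Hl.
  case: (leqP (t + c') b) => Hle.
    by apply: (subsetP (play_sub Hp Hle)).
  rewrite Hrb -(Hconst (t + c')) //; apply/andP; split; rewrite /W; lia.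
pose rho := fun t => if t < b then t else a + (t - b) %% (b - a).
have rho_lt : forall t, rho t < b.
  move=> t; rewrite /rho; case: ifP => // _.
  have : (t - b) %% (b - a) < b - a by rewrite ltn_mod; lia.
  lia.
have rho_ge : forall t, b <= t -> a <= rho t.
  by move=> t Ht; rewrite /rho ltnNge Ht /=; lia.
have rho_id : forall t, t < b -> rho t = t by move=> t Ht; rewrite /rho Ht.
have rho_S : forall t, r (rho t.+1) = r (rho t).+1.
  move=> t; case: (ltnP t.+1 b) => Ht.
    by rewrite !rho_id //; lia.
  case: (ltnP t b) => Ht'.
    have Etb : t.+1 = b by lia.
    rewrite (rho_id t Ht') Etb -Hrab /rho ltnn subnn mod0n addn0 //.
  rewrite /rho ltnNge Ht /= ltnNge Ht' /=.
  have -> : t.+1 - b = (t - b) + 1 by lia.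
  rewrite -modnDml.
  have Hx : (t - b) %% (b - a) < b - a by rewrite ltn_mod; lia.
  case: (ltnP ((t - b) %% (b - a) + 1) (b - a)) => Hx1.
    by rewrite modn_small // addnA addn1.
  have -> : (t - b) %% (b - a) + 1 = b - a by lia.
  rewrite modnn addn0 Hrab; congr r; lia.
exists (fun t => r (rho t)); split.
- by move=> t /=; rewrite rho_S; apply: Hp.
- by rewrite rho_id //; lia.
- move=> t j Hj; rewrite /=.
  case Hl: (lam (r (rho t))) => [m|]; last exact: enat_le_None.
  case Hjw: (j \in (r (rho t)).2).
    apply: (@enat_le_trans _ (Some 0)) => //.
    by apply: LI_le; rewrite /= inXF /sfx addn0.
  have Hjb := good (rho t) m (ltnW (rho_lt t)) Hl.
  rewrite Hj Hjw in Hjb; have {}Hjb := Hjb isT.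
  have Hrt : rho t < a.
    rewrite ltnNge; apply/negP => Hge.
    have : (r (rho t)).2 = (r s).2.
      by apply: Hconst; have := rho_lt t; rewrite /W; lia.
    by move=> Ee; move: Hjw; rewrite Ee -Hrb Hjb.
  have Htb : t < b.
    rewrite ltnNge; apply/negP => Hge; have := rho_ge t Hge; lia.
  rewrite rho_id // in Hrt Hl Hjw Hj *.
  have := Hc t j Hj; rewrite Hl.
  have Hja : j \in (r a).2 by rewrite Hra -Hrb.
  have := @LI_le (fun k => sfx r t k \in XF V j) (a - t).
  rewrite /= inXF /sfx subnKC; last by lia.
  move=> /(_ Hja); rewrite -/(Cost j (sfx r t)).
  case Hct: (Cost j (sfx r t)) => [c''|] //= Hc''a Hc''m.
  have [Hin _] := LI_some Hct.
  apply: (@enat_le_trans _ (Some c'')) => //.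
  apply: LI_le; move: Hin; rewrite /= !inXF /sfx rho_id //; lia.
- apply: LI_none => k; rewrite inXF; apply: avoid.
  have := rho_lt k; rewrite /W in HsW; lia.
Qed.
End S.
Section S3.
Variables (Pl V : finType) (owner : V -> Pl) (E : rel V) (F : Pl -> {set V}).
Local Notation XV := (XV Pl V).
Local Notation Xedge := (Xedge E F).
Local Notation play := (play E F).
Local Notation consistent := (consistent owner).
Local Notation sfx := Defs.suffix.

Lemma key (lam : XV -> enat) (A : pred XV) (M : nat) (u : XV) (x : nat) :
  (forall (w : XV) (m : nat), u.2 \subset w.2 -> lam w = Some m -> m <= M) ->
  A u -> Xowner owner u \notin u.2 ->
  update owner E F lam A u = Some x ->
  x <= #|Pl| * (M + #|V| + 1) + 2.
Proof.
move=> HM HA Hown; rewrite /update HA (negbTE Hown).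
set i := Xowner owner u.
set C := fun u' c => exists r, [/\ play r, r 0 = u', consistent lam r & c = Cost i r].
set L := #|Pl| * (M + #|V| + 1).
have Hsup : forall u', Xedge u u' -> enat_sup (C u') = None \/ enat_le (enat_sup (C u')) (Some L).
  move=> u' Hu'.
  have [Hub Hleast] := sup_spec (C u').
  have NoneC : C u' None -> enat_sup (C u') = None.
    by move=> /Hub; case: (enat_sup _).
  case: (classic (exists y, C u' y /\ ~~ enat_le y (Some L))) => [[y [[r [Hp H0 Hc ->]] Hy]]|H].
  - left; apply: NoneC.
    case Hcost: (Cost i r) Hy => [c|] Hy; last by exists r; split.
    have [r' [Hp' H0' Hc' Hcost']] : exists r', [/\ play r', r' 0 = r 0, consistent lam r' & Cost i r' = None].
      apply: (pump (M := M) Hp Hc _ Hcost); last by move: Hy => /=; rewrite -ltnNge.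
      move=> t m Hl; apply: (HM (r t)) Hl.
      apply: subset_trans (edge_sub Hu') _; rewrite -H0; exact: play_sub.
    by exists r'; split => //; rewrite H0'.
  - right; apply: Hleast => y Hy.
    by apply/negPn/negP => Hn; apply: H; exists y.
have [Hlb Hgr] := inf_spec (fun x0 => exists u', Xedge u u' /\ x0 = enat_sup (C u')).
case Hinf: (enat_inf _) => [y|] //= [<-].
case: (classic (exists u', Xedge u u' /\ enat_sup (C u') <> None)) => [[u' [Hu' Hne]]|H].
- have Hyl : enat_le (Some y) (enat_sup (C u')).
    by rewrite -Hinf; apply: Hlb; exists u'.
  case: (Hsup u' Hu') => // Hs.
  have := enat_le_trans Hyl Hs => /= ?; lia.
- have H' : enat_le None (enat_inf (fun x0 => exists u', Xedge u u' /\ x0 = enat_sup (C u'))).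
    apply: Hgr => z [u' [Hu' ->]].
    case Hz: (enat_sup (C u')) => //; exfalso; apply: H; exists u'; by rewrite Hz.
  by rewrite Hinf in H'.
Qed.

Lemma update_le_lam0 (lam : XV -> enat) (A : pred XV) u :
  A u -> enat_le (update owner E F lam A u) (lam0 owner u).
Proof. by move=> HA; rewrite /update /lam0 HA; case: ifP => // _; apply: enat_le_None. Qed.

Lemma update_anti (lam lam' : XV -> enat) (A : pred XV) u :
  (forall w, enat_le (lam' w) (lam w)) ->
  enat_le (update owner E F lam' A u) (update owner E F lam A u).
Proof.
move=> Hl; rewrite /update; case: (A u); last exact: Hl.
case: ifP => // _.
set C := fun (lm : XV -> enat) u' c => exists r, [/\ play r, r 0 = u', consistent lm r & c = Cost (Xowner owner u) r].
have Hsub : forall u', enat_le (enat_sup (C lam' u')) (enat_sup (C lam u')).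
  move=> u'; have [Hub _] := sup_spec (C lam u'); have [_ Hle] := sup_spec (C lam' u').
  apply: Hle => c [r [Hp H0 Hc ->]]; apply: Hub; exists r; split => //.
  by move=> n j Hj; apply: enat_le_trans (Hc n j Hj) (Hl _).
have Hinf : enat_le (enat_inf (fun x => exists u', Xedge u u' /\ x = enat_sup (C lam' u')))
                    (enat_inf (fun x => exists u', Xedge u u' /\ x = enat_sup (C lam u'))).
  have [Hlb _] := inf_spec (fun x => exists u', Xedge u u' /\ x = enat_sup (C lam' u')).
  have [_ Hgr] := inf_spec (fun x => exists u', Xedge u u' /\ x = enat_sup (C lam u')).
  apply: Hgr => z [u' [Hu' ->]].
  apply: enat_le_trans (Hsub u'); apply: Hlb; by exists u'.
by move: Hinf; case: (enat_inf _); case: (enat_inf _).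
Qed.
End S3.
Section S4.
Variables (Pl V : finType) (owner : V -> Pl) (E : rel V) (F : Pl -> {set V}).
Variables (v0 : V) (J : nat -> {set Pl}).
Local Notation XV := (XV Pl V).
Local Notation lamk := (lam owner E F v0 J).
Definition nk k := (lamseq owner E F v0 J k).2.
Definition Ak k := VgeJ E F v0 J (nk k).

Lemma lamS k : lamk k.+1 = update owner E F (lamk k) (Ak k).
Proof. by []. Qed.

Lemma nkS k : nk k.+1 <= nk k.
Proof. rewrite /nk /=; case: ifP => // _; exact: leq_pred. Qed.

Lemma nk_mono j k : j <= k -> nk k <= nk j.
Proof.
elim: k => [|k IH]; first by rewrite leqn0 => /eqP->.
rewrite leq_eqVlt => /orP [/eqP->//|]; rewrite ltnS => /IH H.
exact: leq_trans (nkS k) H.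
Qed.

Lemma Ak_mono j k u : j <= k -> Ak j u -> Ak k u.
Proof.
move=> Hjk; rewrite /Ak /VgeJ => /existsP [m /andP [H1 H2]].
apply/existsP; exists m; rewrite H2 andbT; exact: leq_trans (nk_mono Hjk) H1.
Qed.

Lemma outside k u : ~~ Ak k u -> lamk k.+1 u = lam0 owner u.
Proof.
elim: k => [|k IH] Hn; first by rewrite lamS /update (negbTE Hn).
rewrite lamS /update (negbTE Hn); apply: IH.
by apply/negP => H; move: Hn; rewrite (Ak_mono (leqnSn k) H).
Qed.

Lemma mono k u : enat_le (lamk k.+1 u) (lamk k u).
Proof.
elim: k u => [|k IH] u.
  rewrite lamS /update; case HA: (Ak 0 u); last exact: enat_le_refl.
  by have := update_le_lam0 owner E F (lamk 0) HA; rewrite /update HA.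
rewrite lamS; case HA: (Ak k.+1 u); last by rewrite /update HA enat_le_refl.
case HA': (Ak k u).
  rewrite lamS.
  have := update_anti owner E F (Ak k.+1) u IH; rewrite /update HA HA'; done.
rewrite (outside (negbT HA')); exact: update_le_lam0.
Qed.

Definition fk k (I : {set Pl}) := #|[set v : V | lamk k ((v, I) : XV) != None]|.

Definition g (M : nat) := #|Pl| * (M + #|V| + 1) + 2.
Definition G t := iter t g 0.

Lemma g_mono a b : a <= b -> g a <= g b.
Proof. move=> H; rewrite /g leq_add2r; apply: leq_mul => //; lia. Qed.

Lemma G_mono a b : a <= b -> G a <= G b.
Proof.
have HS : forall t, G t <= G t.+1.
  elim => [|t IH] //=; exact: g_mono.
move=> Hab; rewrite -(subnKC Hab); elim: (b - a) => [|d IH]; first by rewrite addn0.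
rewrite addnS; exact: leq_trans IH (HS _).
Qed.

Definition ee k (I : {set Pl}) := #|V| * (#|Pl| - #|I|) + fk k I.

Lemma fk_mono k I : fk k I <= fk k.+1 I.
Proof.
apply: subset_leq_card; apply/subsetP => v; rewrite !inE.
have := mono k ((v, I) : XV); case: (lamk k.+1 _); case: (lamk k _) => //.
Qed.

Lemma fk_le k I : fk k I <= #|V|.
Proof. exact: max_card. Qed.

Lemma ee_sub k (I I' : {set Pl}) : I \subset I' -> ee k I' <= ee k I.
Proof.
move=> Hs; case: (eqVneq I I') => [->//|Hne].
have Hpr : I \proper I' by rewrite properEneq Hne Hs.
have Hc := proper_card Hpr.
have Hc' : #|I'| <= #|Pl| by apply: max_card.
have H1 : #|Pl| - #|I'| + 1 <= #|Pl| - #|I| by lia.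
have := leq_mul (leqnn #|V|) H1; rewrite mulnDr muln1.
have := fk_le k I'; rewrite /ee; lia.
Qed.

Lemma lam_inv k (u : XV) x : lamk k u = Some x -> x <= G (ee k u.2).
Proof.
elim: k u x => [|k IH] u x.
  by rewrite /lamk /= /lam0; case: ifP => // _ [<-].
move=> Hx.
case Hold: (lamk k u) => [y|].
  have := mono k u; rewrite Hx Hold /= => Hxy.
  apply: leq_trans Hxy _; apply: leq_trans (IH _ _ Hold) _; apply: G_mono.
  rewrite /ee leq_add2l; exact: fk_mono.
case HA: (Ak k u); last first.
  by move: Hx; rewrite lamS /update HA Hold.
case Ho: (Xowner owner u \in u.2).
  by move: Hx; rewrite lamS /update HA Ho => [[<-]].
rewrite lamS in Hx.
have Hk := @key _ _ owner E F (lamk k) (Ak k) (G (ee k u.2)) u x _ HA (negbT Ho) Hx.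
  apply: leq_trans (Hk _) _.
    move=> w m Hs Hl; apply: leq_trans (IH _ _ Hl) _; apply: G_mono; exact: ee_sub.
  have -> : #|Pl| * (G (ee k u.2) + #|V| + 1) + 2 = G (ee k u.2).+1 by [].
  apply: G_mono; rewrite /ee -addnS leq_add2l.
  apply: proper_card; apply/properP; split.
    apply/subsetP => v; rewrite !inE.
    have := mono k ((v, u.2) : XV); case: (lamk k.+1 _); case: (lamk k _) => //.
  exists u.1; rewrite inE -surjective_pairing.
    by rewrite lamS Hx.
  by rewrite Hold.
Qed.
End S4.

Lemma G_bound (Pl V : finType) t : 1 < #|V| -> #|Pl| <= #|V| ->
  G Pl V t + (#|V| + 6) <= #|V| ^ t * (#|V| + 6).
Proof.
move=> H2 Hp; elim: t => [|t IH]; first by rewrite expn0 mul1n.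
rewrite /G iterS -/(G Pl V t) /g expnS -mulnA.
set y := G Pl V t in IH *.
have : #|Pl| * (y + #|V| + 1) <= #|V| * (y + #|V| + 1) by apply: leq_mul.
have := leq_mul (leqnn #|V|) IH.
nia.
Qed.

Theorem corollary3p12 :
  exists C : nat,
  forall (Pl V : finType) (owner : V -> Pl) (E : rel V) (F : Pl -> {set V}) (v0 : V),
    1 < #|V| -> #|Pl| <= #|V| -> (forall v, exists v', E v v') ->
    forall J : nat -> {set Pl}, valid_order E F v0 J ->
    forall (k l : nat), 1 <= l <= NN E F v0 ->
      mR (lam owner E F v0 J k) (VJ J l)
        <= C * #|V| ^ ((#|V| + 3) * (#|Pl| + 2)) /\
      mR (lam owner E F v0 J k) (VgeJ E F v0 J l)
        <= C * #|V| ^ ((#|V| + 3) * (#|Pl| + 2)).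
Proof.
exists 1 => Pl V owner E F v0 H2 Hp _ J _ k l _.
have Hall : forall u, odflt 0 (lam owner E F v0 J k u) <= 1 * #|V| ^ ((#|V| + 3) * (#|Pl| + 2)).
  move=> u; case Hu: (lam _ _ _ _ _ _ u) => [x|] //=.
  have := lam_inv Hu => Hx.
  have He : ee owner E F v0 J k u.2 <= #|V| * #|Pl| + #|V|.
    rewrite /ee; apply: leq_add; first by apply: leq_mul => //; apply: leq_subr.
    exact: fk_le.
  have := G_mono Pl V He => HG.
  have := @G_bound Pl V (#|V| * #|Pl| + #|V|) H2 Hp => HB.
  have H3 : #|V| + 6 <= #|V| ^ 3 by rewrite !expnS expn0 muln1; nia.
  have HB' : G Pl V (#|V| * #|Pl| + #|V|) <= #|V| ^ (#|V| * #|Pl| + #|V| + 3).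
    rewrite expnD; apply: leq_trans (leq_mul (leqnn _) H3); lia.
  rewrite mul1n; apply: leq_trans Hx _; apply: leq_trans HG _; apply: leq_trans HB' _.
  apply: leq_pexp2l; first lia.
  move: #|V| #|Pl| => a b; nia.
by split; apply/bigmax_leqP => u _; apply: Hall.
Qed.
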